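(* Let $X>0$ and let $w:[0,X]\to\mathbb{R}$ be a smooth function with $w''(x)\ge w(x)$ and $w(x)\ge0$ for all $x\in[0,X]$, and $w'(0)\ge0$. Let $p:[0,X]\to\mathbb{R}^+$ be an increasing integrable function. Then \[\int_0^Xw(x)\,dx\le\frac{2}{p(X/2)}\int_0^Xw(x)p(x)\,dx.\]
   Context: $\mathbb{R}^+$ denotes the positive reals. *)

(* Defs.v *)
From Stdlib Require Import Reals.
From Coquelicot Require Import Coquelicot.
Open Scope R_scope.

(* w is smooth (C^infinity) on [a,b]: every iterated derivative of w exists
   (as a two-sided derivative of the function w : R -> R) at every point of [a,b]. *)
Definition smooth_on (w : R -> R) (a b : R) : Prop :=
  forall (n : nat) (x : R), a <= x <= b -> ex_derive (Derive_n w n) x.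

Definition increasing_on (p : R -> R) (a b : R) : Prop :=
  forall x y : R, a <= x -> x <= y -> y <= b -> p x <= p y.

(* Main.v *)
Require Import Defs.
From Stdlib Require Import Reals Lra Lia.
From Coquelicot Require Import Coquelicot.
Open Scope R_scope.

Lemma mvt_gen' (f df : R -> R) (a b : R) :
  (forall x, a <= x <= b -> is_derive f x (df x)) ->
  forall x y, a <= x <= b -> a <= y <= b ->
  exists c, a <= c <= b /\ f y - f x = df c * (y - x).
Proof.
  intros Hd x y Hx Hy.
  destruct (MVT_gen f x y df) as [c [Hc Heq]].
  - intros t Ht. apply Hd.
    assert (Rmin a b <= Rmin x y) by (apply Rle_trans with (Rmin x y); [|lra];
      unfold Rmin; repeat destruct Rle_dec; lra).
    split; unfold Rmin, Rmax in *; repeat destruct Rle_dec; lra.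
  - intros t Ht. apply continuity_pt_filterlim.
    apply (ex_derive_continuous (K:=R_AbsRing) (V:=R_NormedModule) f). exists (df t). apply Hd.
    split; unfold Rmin, Rmax in *; repeat destruct Rle_dec; lra.
  - exists c. split; [|exact Heq].
    split; unfold Rmin, Rmax in *; repeat destruct Rle_dec; lra.
Qed.

Lemma incr_deriv (f df : R -> R) (a b : R) :
  (forall x, a <= x <= b -> is_derive f x (df x)) ->
  (forall x, a <= x <= b -> 0 <= df x) ->
  forall x y, a <= x -> x <= y -> y <= b -> f x <= f y.
Proof.
  intros Hd Hp x y H1 H2 H3.
  destruct (mvt_gen' f df a b Hd x y) as [c [Hc Heq]]; try lra.
  assert (0 <= df c * (y - x)) by (apply Rmult_le_pos; [apply Hp; lra | lra]).
  lra.
Qed.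

Lemma lip_deriv (f df : R -> R) (a b D : R) :
  (forall x, a <= x <= b -> is_derive f x (df x)) ->
  (forall x, a <= x <= b -> Rabs (df x) <= D) ->
  forall x y, a <= x <= b -> a <= y <= b -> Rabs (f y - f x) <= D * Rabs (y - x).
Proof.
  intros Hd Hp x y H1 H2.
  destruct (mvt_gen' f df a b Hd x y) as [c [Hc Heq]]; try lra.
  rewrite Heq, Rabs_mult. apply Rmult_le_compat_r; [apply Rabs_pos|]. apply Hp; lra.
Qed.
Lemma int_part_eq (y : R) (k : nat) : INR k < y < INR k + 1 -> Int_part y = Z.of_nat k.
Proof.
  intros Hy. destruct (base_Int_part y) as [H1 H2].
  rewrite INR_IZR_INZ in Hy.
  assert (A : (Int_part y < Z.of_nat k + 1)%Z).
  { apply lt_IZR. rewrite plus_IZR. simpl. lra. }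
  assert (B : (Z.of_nat k - 1 < Int_part y)%Z).
  { apply lt_IZR. rewrite minus_IZR. simpl. lra. }
  lia.
Qed.

Lemma int_part_nonneg (y : R) : 0 <= y -> 0 <= IZR (Int_part y).
Proof.
  intros Hy. destruct (base_Int_part y) as [H1 H2].
  assert (A : (-1 < Int_part y)%Z) by (apply lt_IZR; simpl; lra).
  apply IZR_le. lia.
Qed.

Lemma ex_RInt_prod (X D M : R) (w p : R -> R) : 0 < X -> 0 <= D -> 0 <= M ->
  (forall x y, 0<=x<=X -> 0<=y<=X -> Rabs (w y - w x) <= D * Rabs (y - x)) ->
  (forall x, 0<=x<=X -> Rabs (p x) <= M) -> ex_RInt p 0 X ->
  ex_RInt (fun x => w x * p x) 0 X.
Proof.
  intros HX HD HM Hw Hp Hi.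
  set (cl := fun x => Rmax 0 (Rmin X x)).
  assert (cl_in : forall x, 0 <= cl x <= X).
  { intros x; unfold cl, Rmax, Rmin; repeat destruct Rle_dec; lra. }
  assert (cl_id : forall x, 0 <= x <= X -> cl x = x).
  { intros x Hx; unfold cl, Rmax, Rmin; repeat destruct Rle_dec; lra. }
  set (hn := fun n : nat => X / INR (S n)).
  assert (hn_pos : forall n, 0 < hn n).
  { intros n; unfold hn. apply Rdiv_lt_0_compat; [lra| apply lt_0_INR; lia]. }
  set (grid := fun n x => hn n * IZR (Int_part (cl x / hn n))).
  assert (grid_prop : forall n x, 0 <= grid n x <= cl x /\ cl x - grid n x < hn n).
  { intros n x. unfold grid.
    pose proof (hn_pos n) as Hh. pose proof (cl_in x).
    destruct (base_Int_part (cl x / hn n)) as [H1 H2].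
    pose proof (int_part_nonneg (cl x / hn n)) as H3.
    assert (0 <= cl x / hn n) by (apply Rdiv_le_0_compat; lra).
    specialize (H3 H0).
    set (m := IZR (Int_part (cl x / hn n))) in *.
    assert (E : cl x = hn n * (cl x / hn n)) by (field; lra).
    split; [split|].
    - apply Rmult_le_pos; lra.
    - rewrite E at 1. apply Rmult_le_compat_l; lra.
    - rewrite E at 1. assert (hn n * (cl x / hn n - m) < hn n * 1)
        by (apply Rmult_lt_compat_l; lra). lra. }
  set (F := fun n x => w (grid n x) * p (cl x)).
  set (G := fun x => w (cl x) * p (cl x)).
  assert (S1 : forall n, ex_RInt (F n) 0 X).
  { intros n.
    assert (K : forall k, (k <= S n)%nat -> ex_RInt (F n) 0 (INR k * hn n)).
    { induction k as [|k IH]; intros Hk.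
      - simpl. rewrite Rmult_0_l. apply ex_RInt_point.
      - assert (Hkh : INR (S k) * hn n <= X).
        { assert (E : INR (S n) * hn n = X) by (unfold hn; field; apply not_0_INR; lia).
          rewrite <- E. apply Rmult_le_compat_r; [left; apply hn_pos|]. apply le_INR; lia. }
        pose proof (hn_pos n) as Hh.
        assert (Hk0 : 0 <= INR k * hn n) by (apply Rmult_le_pos; [apply pos_INR|lra]).
        rewrite S_INR in Hkh |- *.
        apply ex_RInt_Chasles with (INR k * hn n); [apply IH; lia|].
        apply ex_RInt_ext with (fun x => scal (w (INR k * hn n)) (p x)).
        + intros x Hx. rewrite Rmin_left in Hx by lra. rewrite Rmax_right in Hx by lra.
          unfold F. rewrite (cl_id x) by lra. unfold grid. rewrite (cl_id x) by lra.
          rewrite (int_part_eq _ k).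
          * rewrite <- INR_IZR_INZ. rewrite (Rmult_comm (hn n)). reflexivity.
          * split.
            -- apply (Rmult_lt_reg_r (hn n)); [lra|]. unfold Rdiv. rewrite Rmult_assoc, Rinv_l; lra.
            -- apply (Rmult_lt_reg_r (hn n)); [lra|]. unfold Rdiv. rewrite Rmult_assoc, Rinv_l; lra.
        + apply (ex_RInt_scal (V:=R_NormedModule) p).
          apply (ex_RInt_Chasles_1 (V:=R_CompleteNormedModule)) with X; [lra|].
          apply (ex_RInt_Chasles_2 (V:=R_CompleteNormedModule)) with 0; [lra|exact Hi]. }
    assert (E : INR (S n) * hn n = X) by (unfold hn; field; apply not_0_INR; lia).
    specialize (K (S n) (le_n _)). rewrite E in K. exact K. }
  destruct (filterlim_RInt (V:=R_CompleteNormedModule) F 0 X eventually eventually_filter G (fun n => RInt (F n) 0 X)) as [If [_ HI]].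
  - intros n. apply (RInt_correct (V:=R_CompleteNormedModule)). apply S1.
  - intros P [eps HP].
    destruct (archimed_cor1 (eps / (D * M * X + 1))) as [N [HN HN0]].
    { apply Rdiv_lt_0_compat; [apply cond_pos|]. pose proof (Rmult_le_pos _ _ (Rmult_le_pos _ _ HD HM) (Rlt_le _ _ HX)). lra. }
    exists N. intros n Hn. apply HP. intros t.
    change (Rabs (F n t - G t) < eps). unfold F, G.
    destruct (grid_prop n t) as [[Hg1 Hg2] Hg3]. pose proof (cl_in t) as Hc.
    replace (w (grid n t) * p (cl t) - w (cl t) * p (cl t)) with ((w (grid n t) - w (cl t)) * p (cl t)) by ring.
    rewrite Rabs_mult.
    assert (H1 : Rabs (w (grid n t) - w (cl t)) <= D * hn n).
    { eapply Rle_trans. apply Hw; lra. apply Rmult_le_compat_l; [lra|].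
      rewrite Rabs_left1 by lra. lra. }
    assert (H2 : Rabs (p (cl t)) <= M) by (apply Hp; lra).
    assert (H3 : Rabs (w (grid n t) - w (cl t)) * Rabs (p (cl t)) <= D * hn n * M).
    { apply Rmult_le_compat; try apply Rabs_pos; assumption. }
    assert (H4 : hn n <= X * / INR N).
    { unfold hn, Rdiv. apply Rmult_le_compat_l; [lra|]. apply Rinv_le_contravar.
      apply lt_0_INR; lia. apply le_INR; lia. }
    assert (H5 : D * hn n * M <= D * M * X * / INR N).
    { replace (D * M * X * / INR N) with (D * M * (X * / INR N)) by ring.
      replace (D * hn n * M) with (D * M * hn n) by ring.
      apply Rmult_le_compat_l; [apply Rmult_le_pos|]; lra. }
    assert (HDMX : 0 <= D * M * X) by (apply Rmult_le_pos; [apply Rmult_le_pos|]; lra).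
    assert (HiN : 0 < / INR N) by (apply Rinv_0_lt_compat, lt_0_INR; lia).
    assert (H6 : (D * M * X + 1) * / INR N < eps).
    { apply (Rmult_lt_reg_r (/ (D * M * X + 1))). apply Rinv_0_lt_compat; lra.
      replace ((D * M * X + 1) * / INR N * / (D * M * X + 1)) with (/ INR N) by (field; split; first [apply not_0_INR; lia | lra]).
      exact HN. }
    assert (H7 : D * M * X * / INR N <= (D * M * X + 1) * / INR N) by (apply Rmult_le_compat_r; lra).
    lra.
  - apply (ex_RInt_ext (V:=R_CompleteNormedModule)) with G.
    + intros x Hx. rewrite Rmin_left in Hx by lra. rewrite Rmax_right in Hx by lra.
      unfold G. rewrite cl_id by lra. reflexivity.
    + exists If. exact HI.
Qed.

Theorem proposition5p5 (X : R) (w p : R -> R) :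
  0 < X ->
  smooth_on w 0 X ->
  (forall x, 0 <= x <= X -> Derive_n w 2 x >= w x) ->
  (forall x, 0 <= x <= X -> w x >= 0) ->
  Derive w 0 >= 0 ->
  (forall x, 0 <= x <= X -> 0 < p x) ->
  increasing_on p 0 X ->
  ex_RInt p 0 X ->
  RInt w 0 X <= 2 / p (X / 2) * RInt (fun x => w x * p x) 0 X.
Proof.
  intros HX Hs H2 Hw0 Hd0 Hp0 Hinc Hpi.
  assert (Hd1 : forall x, 0 <= x <= X -> is_derive w x (Derive w x)).
  { intros x Hx. apply Derive_correct. pose proof (Hs 0%nat x Hx) as H. exact H. }
  assert (Hd2 : forall x, 0 <= x <= X -> is_derive (Derive w) x (Derive_n w 2 x)).
  { intros x Hx. pose proof (Hs 1%nat x Hx) as H. change (ex_derive (Derive w) x) in H.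
    apply Derive_correct in H. exact H. }
  assert (Hdi : forall x y, 0 <= x -> x <= y -> y <= X -> Derive w x <= Derive w y).
  { apply (incr_deriv (Derive w) (Derive_n w 2) 0 X Hd2).
    intros x Hx. specialize (H2 x Hx). specialize (Hw0 x Hx). lra. }
  assert (Hdn : forall x, 0 <= x <= X -> 0 <= Derive w x).
  { intros x Hx. pose proof (Hdi 0 x (Rle_refl 0) (proj1 Hx) (proj2 Hx)). lra. }
  assert (Hwi : forall x y, 0 <= x -> x <= y -> y <= X -> w x <= w y).
  { apply (incr_deriv w (Derive w) 0 X Hd1 Hdn). }
  assert (Hlip := lip_deriv w (Derive w) 0 X (Derive w X) Hd1).
  assert (HiW : ex_RInt w 0 X).
  { apply (ex_RInt_continuous (V:=R_CompleteNormedModule)). intros z Hz.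
    rewrite Rmin_left in Hz by lra. rewrite Rmax_right in Hz by lra.
    apply (ex_derive_continuous (K:=R_AbsRing) (V:=R_NormedModule) w).
    exists (Derive w z). apply Hd1; lra. }
  assert (HiWP : ex_RInt (fun x => w x * p x) 0 X).
  { apply (ex_RInt_prod X (Derive w X) (p X)); try lra.
    - apply Hdn; lra.
    - left; apply Hp0; lra.
    - apply Hlip. intros x Hx. rewrite Rabs_pos_eq by (apply Hdn; lra).
      apply Hdi; lra.
    - intros x Hx. rewrite Rabs_pos_eq by (left; apply Hp0; lra).
      apply Hinc; lra.
    - exact Hpi. }
  set (h := X / 2).
  assert (Hh : 0 < h < X) by (unfold h; lra).
  assert (Ch : forall f : R -> R, ex_RInt (V:=R_NormedModule) f 0 X -> ex_RInt (V:=R_NormedModule) f 0 h /\ ex_RInt (V:=R_NormedModule) f h X).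
  { intros f Hf. split.
    - apply (ex_RInt_Chasles_1 (V:=R_CompleteNormedModule)) with X; [lra|exact Hf].
    - apply (ex_RInt_Chasles_2 (V:=R_CompleteNormedModule)) with 0; [lra|exact Hf]. }
  destruct (Ch _ HiW) as [HW1 HW2].
  destruct (Ch _ HiWP) as [HWP1 HWP2].
  assert (EW : RInt w 0 h + RInt w h X = RInt w 0 X)
    by exact (RInt_Chasles (V:=R_CompleteNormedModule) w 0 h X HW1 HW2).
  assert (EWP : RInt (fun x => w x * p x) 0 h + RInt (fun x => w x * p x) h X
                = RInt (fun x => w x * p x) 0 X)
    by exact (RInt_Chasles (V:=R_CompleteNormedModule) _ 0 h X HWP1 HWP2).
  assert (Hsh : RInt w 0 h <= RInt w h X).
  { assert (Eb1 : 1 * h + - h = 0) by ring.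
    assert (Eb2 : 1 * X + - h = h) by (unfold h; field).
    pose proof (RInt_comp_lin (V:=R_CompleteNormedModule) w 1 (- h) h X) as E.
    pose proof (ex_RInt_comp_lin (V:=R_CompleteNormedModule) w 1 (- h) h X) as E'.
    rewrite Eb1, Eb2 in E, E'.
    specialize (E HW1). specialize (E' HW1).
    rewrite <- E.
    apply (RInt_le (fun y => scal 1 (w (1 * y + - h))) w h X); [lra|exact E'|exact HW2|].
    intros x Hx. change (1 * w (1 * x + - h) <= w x). rewrite !Rmult_1_l.
    apply Hwi; lra. }
  assert (HJ0 : 0 <= RInt (fun x => w x * p x) 0 h).
  { apply RInt_ge_0; [lra|exact HWP1|]. intros x Hx.
    apply Rmult_le_pos; [apply Rge_le, Hw0; lra| left; apply Hp0; lra]. }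
  assert (HJ1 : p h * RInt w h X <= RInt (fun x => w x * p x) h X).
  { assert (E : RInt (fun x => scal (p h) (w x)) h X = scal (p h) (RInt w h X))
      by exact (RInt_scal (V:=R_CompleteNormedModule) w h X (p h) HW2).
    change (scal (p h) (RInt w h X) <= RInt (fun x => w x * p x) h X).
    rewrite <- E.
    apply (RInt_le (fun x => scal (p h) (w x)) (fun x => w x * p x) h X); [lra| |exact HWP2|].
    - apply (ex_RInt_scal (V:=R_NormedModule) w). exact HW2.
    - intros x Hx. change (p h * w x <= w x * p x). rewrite Rmult_comm.
      apply Rmult_le_compat_l; [apply Rge_le, Hw0; lra|]. apply Hinc; lra. }
  assert (Hph : 0 < p h) by (apply Hp0; lra).
  apply Rle_trans with (2 * RInt w h X); [lra|].
  replace (2 * RInt w h X) with (2 / p h * (p h * RInt w h X)) by (field; lra).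
  apply Rmult_le_compat_l; [apply Rdiv_le_0_compat; lra|]. lra.
Qed.
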